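(* For every integer $d\geq 0$, $\chi_{td}(Q_d) \leq 2^{d+1}-1$, where $Q_d$ is the $d$-dimensional hypercube graph.
   Context: $Q_d$ is the graph with vertex set $\{0,1\}^d$ in which two vertices are adjacent iff they differ in exactly one coordinate ($Q_0$ is a single vertex). For a simple graph $G$ and a positive integer $k$, a proper $k$-total difference labeling of $G$ is a function $f: V(G)\to\{1,\dots,k\}$, extended to edges by $f(\{u,v\}) = |f(u)-f(v)|$, such that: (i) adjacent vertices receive different labels; (ii) two distinct edges sharing a vertex receive different labels; (iii) no edge receives the same label as either of its endpoints. $\chi_{td}(G)$ denotes the smallest $k$ for which such a labeling exists. *)

(* Defs.v *)
From mathcomp Require Import all_boot.
Set Implicit Arguments. Unset Strict Implicit. Unset Printing Implicit Defensive.

Definition hamming d (u v : d.-tuple bool) : nat :=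
  count id [seq x.1 != x.2 | x <- zip u v].

Definition Q_adj d : rel (d.-tuple bool) := fun u v => hamming u v == 1.

Definition edge_lab (T : Type) (f : T -> nat) (u v : T) : nat :=
  maxn (f u) (f v) - minn (f u) (f v).

Definition proper_td_labeling (T : finType) (adj : rel T) (k : nat) (f : T -> nat) : Prop :=
  [/\ (forall v, 1 <= f v <= k),
      (forall u v, adj u v -> f u != f v),
      (forall u v w, adj u v -> adj u w -> v != w -> edge_lab f u v != edge_lab f u w)
    &
      (forall u v, adj u v -> edge_lab f u v != f u /\ edge_lab f u v != f v)].

Definition chi_td_le (T : finType) (adj : rel T) (k : nat) : Prop :=
  exists f : T -> nat, proper_td_labeling adj k f.

(* Main.v *)
Require Import Defs.
From mathcomp Require Import all_boot.
From mathcomp Require Import zify.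

Fixpoint bin (s : seq bool) : nat := if s is a :: s' then a + 2 * bin s' else 0.

Definition hs (s t : seq bool) := count id [seq x.1 != x.2 | x <- zip s t].

Lemma hs_cons a b s t : hs (a :: s) (b :: t) = (a != b) + hs s t.
Proof. by []. Qed.

Lemma hs0 s t : size s = size t -> hs s t = 0 -> s = t.
Proof.
elim: s t => [|a s IH] [|b t] //= [] Hs.
rewrite hs_cons => H.
have Hab : (a != b) = false by lia.
move/negbFE/eqP: Hab => ->; congr (_ :: _); apply: IH => //; lia.
Qed.

Lemma bin_lt s : bin s < 2 ^ size s.
Proof. elim: s => [|a s IH] //=; rewrite expnS; case: a => /=; lia. Qed.

Lemma hs1 s t : size s = size t -> hs s t = 1 ->
  exists i, [/\ i < size s, t = set_nth false s i (~~ nth false s i) &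
     maxn (bin s) (bin t) - minn (bin s) (bin t) = 2 ^ i].
Proof.
elim: s t => [|a s IH] [|b t] //= [] Hs.
rewrite hs_cons.
case: (eqVneq a b) => [<-|Hab] /= H.
  have [i [Hi Ht Hd]] := IH t Hs H.
  exists i.+1; split => //; first by rewrite Ht.
  rewrite expnS; lia.
have Ht : s = t by apply: hs0 => //; lia.
subst t; exists 0; split => //.
  by case: a b Hab => [] [].
by case: a b Hab => [] [] //= _; lia.
Qed.

Theorem mainTheorem9 (d : nat) : chi_td_le (@Q_adj d) (2 ^ d.+1 - 1).
Proof.
exists (fun v : d.-tuple bool => (bin v).*2.+1).
have Hadj : forall u v : d.-tuple bool, Q_adj u v -> exists i,
    [/\ i < d, tval v = set_nth false u i (~~ nth false u i) &
     maxn (bin u) (bin v) - minn (bin u) (bin v) = 2 ^ i].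
  move=> u v /eqP H.
  have := @hs1 (tval u) (tval v).
  rewrite !size_tuple => /(_ erefl H) [i [Hi Ht Hd]]; by exists i.
have E : forall u v : d.-tuple bool,
   edge_lab (fun v : d.-tuple bool => (bin v).*2.+1) u v =
   2 * (maxn (bin u) (bin v) - minn (bin u) (bin v)).
  move=> u v; rewrite /edge_lab; lia.
split.
- move=> v; have := bin_lt v; rewrite size_tuple expnS -!muln2.
  move: (2 ^ d) (bin v) => X b H; apply/andP; split => //; lia.
- move=> u v /Hadj [i [_ _ Hd]].
  have : 0 < 2 ^ i by rewrite expn_gt0.
  lia.
- move=> u v w /Hadj [i [_ Hv Hdv]] /Hadj [j [_ Hw Hdw]] Hvw.
  rewrite !E Hdv Hdw.
  apply/negP => /eqP H.
  have Hij : i = j.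
    apply/eqP; rewrite -(@eqn_exp2l 2) //; apply/eqP; lia.
  subst j; move/negP: Hvw; apply; apply/eqP/val_inj; by rewrite /= Hv Hw.
- move=> u v _; rewrite E; lia.
Qed.
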